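(* Let $0<q<1$, $s\ge2$, $\alpha\in\mathbb{R}\setminus\mathbb{Z}_-$. For $j=1,\dots,s-1$ let $a_j>0$, $c_j>0$ be real and $b_j,d_j\in\mathbb{C}$ such that $a_jn+\mathrm{Re}(b_j)\notin\mathbb{Z}_-$ and $c_jn+\mathrm{Re}(d_j)\notin\mathbb{Z}_-$ for all positive integers $n$. Put $A=\dfrac{[a_1]_q\cdots[a_{s-1}]_q}{[c_1]_q\cdots[c_{s-1}]_q}$ and $$\lambda_n=\frac{q^{n+\alpha}\,[n]_{q^{c_1}}\cdots[n]_{q^{c_{s-1}}}}{[n]_q\,[n]_{q^{a_1}}\cdots[n]_{q^{a_{s-1}}}}(q-1).$$ Then, uniformly on compact subsets of $\mathbb{C}$, $$\lim_{n\to+\infty}{}_s\phi_s\!\left(\begin{array}{c}q^{-n},q^{a_1n+b_1},\dots,q^{a_{s-1}n+b_{s-1}}\\ q^{\alpha},q^{c_1n+d_1},\dots,q^{c_{s-1}n+d_{s-1}}\end{array};q,\lambda_n z\right)={}_0\phi_1\!\left(\begin{array}{c}-\\ q^{\alpha}\end{array};q,-Az(q-1)^2q^{\alpha}\right)=(Az)^{\frac{1-\alpha}{2}}\,\Gamma_q(\alpha)\,J^{(2)}_{\alpha-1}\!\left(2(1-q)\sqrt{Az};q\right).$$ For $s=1$ one has, uniformly on compact subsets of $\mathbb{C}$, $$\lim_{n\to+\infty}{}_1\phi_1\!\left(\begin{array}{c}q^{-n}\\ q^{\alpha}\end{array};q,\frac{q^{n+\alpha}}{[n]_q}(q-1)z\right)={}_0\phi_1\!\left(\begin{array}{c}-\\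 q^{\alpha}\end{array};q,-z(q-1)^2q^{\alpha}\right)=z^{\frac{1-\alpha}{2}}\Gamma_q(\alpha)J^{(2)}_{\alpha-1}\!\left(2(1-q)\sqrt z;q\right).$$ (Powers and square roots in the last expressions are taken with principal branches, and the product $(Az)^{\frac{1-\alpha}{2}}J^{(2)}_{\alpha-1}(\cdot)$ is understood as the entire function given by the ${}_0\phi_1$ expression.)
   Context: $\mathbb{Z}_-=\{0,-1,-2,\dots\}$. For $w\in\mathbb{C}$, $q^{w}:=e^{w\ln q}$. For $a\in\mathbb{C}$: $(a;q)_0=1$, $(a;q)_k=\prod_{j=0}^{k-1}(1-aq^{j})$, $(a;q)_\infty=\prod_{j\ge0}(1-aq^{j})$, and $(a_1,\dots,a_r;q)_k=\prod_{i=1}^r(a_i;q)_k$. The $q$-number is $[z]_q=\dfrac{1-q^{z}}{1-q}$, and $[n]_{q^{a}}=\dfrac{1-q^{an}}{1-q^{a}}$. The basic hypergeometric series is $${}_r\phi_s\!\left(\begin{array}{c}a_1,\dots,a_r\\ b_1,\dots,b_s\end{array};q,z\right)=\sum_{k=0}^{\infty}\frac{(a_1,\dots,a_r;q)_k}{(b_1,\dots,b_s;q)_k}(-1)^{(1+s-r)k}q^{(1+s-r)\binom{k}{2}}\frac{z^k}{(q;q)_k};$$ when one numerator parameter is $q^{-n}$ it is a polynomial in $z$ of degree at most $n$; ''$-$'' denotes an empty parameter list. The $q$-Gamma function is $\Gamma_q(z)=\dfrac{(q;q)_\infty}{(q^{z};q)_\infty}(1-q)^{1-z}$. The $q$-Bessel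 function is $J^{(2)}_{\nu}(x;q)=\dfrac{(q^{\nu+1};q)_\infty}{(q;q)_\infty}\left(\dfrac{x}{2}\right)^{\nu}{}_0\phi_1\!\left(\begin{array}{c}-\\ q^{\nu+1}\end{array};q,-\dfrac{q^{\nu+1}x^2}{4}\right)$. *)

(* Defs.v *)
From Stdlib Require Import Reals.
From Coquelicot Require Import Coquelicot.
Open Scope R_scope.

Definition C_lim (u : nat -> C) : C := @lim (CompleteNormedModule.CompleteSpace _ C_CompleteNormedModule) (filtermap u eventually).
Definition C_series (u : nat -> C) : C := C_lim (sum_n u).

Definition cexp (z : C) : C :=
  (exp (Re z) * cos (Im z), exp (Re z) * sin (Im z)).

Definition qpow (q : R) (w : C) : C := cexp (w * RtoC (ln q))%C.

Fixpoint prodR (f : nat -> R) (m : nat) : R :=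
  match m with O => 1 | S k => prodR f k * f k end.
Fixpoint prodC (f : nat -> C) (m : nat) : C :=
  match m with O => RtoC 1 | S k => (prodC f k * f k)%C end.

Definition qpoch (a : C) (q : R) (k : nat) : C :=
  prodC (fun j => (RtoC 1 - a * RtoC (q ^ j))%C) k.
Definition qpoch_inf (a : C) (q : R) : C := C_lim (qpoch a q).

(* q-number [x]_q = (1 - q^x)/(1-q), x real; [n]_{q^a} = qnum (Rpower q a) n *)
Definition qnum (q x : R) : R := (1 - Rpower q x) / (1 - q).

Definition phi_term (r s : nat) (num den : nat -> C) (q : R) (z : C) (k : nat) : C :=
  (prodC (fun i => qpoch (num i) q k) r / prodC (fun i => qpoch (den i) q k) s
   * RtoC (powerRZ ((-1) ^ k * q ^ (Nat.div (k * (k - 1)) 2))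
             (1 + Z.of_nat s - Z.of_nat r)%Z)
   * z ^ k / qpoch (RtoC q) q k)%C.

Definition rphis (r s : nat) (num den : nat -> C) (q : R) (z : C) : C :=
  C_series (phi_term r s num den q z).

(* principal argument in (-pi, pi] *)
Definition Carg (w : C) : R :=
  let x := Re w in let y := Im w in
  if Rlt_dec 0 x then atan (y / x)
  else if Rlt_dec x 0 then
    (if Rle_dec 0 y then atan (y / x) + PI else atan (y / x) - PI)
  else if Rlt_dec 0 y then PI / 2
  else if Rlt_dec y 0 then - (PI / 2) else 0.

(* principal logarithm and principal power w^c = e^{c Log w} (w <> 0);
   by convention 0^c := 0 *)
Definition Clog (w : C) : C := (ln (Cmod w), Carg w).
Definition Cppow (w c : C) : C :=
  if Ceq_dec w 0 then 0%C else cexp (c * Clog w)%C.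
Definition Csqrt (w : C) : C := Cppow w (RtoC (1 / 2)).

Definition Gamma_q (q : R) (z : C) : C :=
  (qpoch_inf (RtoC q) q / qpoch_inf (qpow q z) q * qpow (1 - q) (RtoC 1 - z))%C.

Definition Jq2 (nu : C) (x : C) (q : R) : C :=
  (qpoch_inf (qpow q (nu + RtoC 1)) q / qpoch_inf (RtoC q) q
   * Cppow (x / RtoC 2) nu
   * rphis 0 1 (fun _ => 0%C) (fun _ => qpow q (nu + RtoC 1)) q
       (- qpow q (nu + RtoC 1) * x ^ 2 / RtoC 4))%C.

(* Main.v *)
Require Import Defs.
From Stdlib Require Import Reals Lra Lia FunctionalExtensionality.
From Coquelicot Require Import Coquelicot.
Open Scope R_scope.

Lemma C_lim_correct (u : nat -> C) (l : C) :
  (forall eps, 0 < eps -> exists N, forall n, (N <= n)%nat -> Cmod (u n - l) < eps) ->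
  Defs.C_lim u = l.
Proof.
  intros H.
  unfold Defs.C_lim.
  set (F := filtermap u eventually).
  assert (HF : ProperFilter F).
  { apply filtermap_proper_filter. apply eventually_filter. }
  assert (Hl : is_filter_lim F l).
  { intros P [eps Heps]. unfold F, filtermap.
    destruct (H eps (cond_pos eps)) as [N HN]. exists N. intros n Hn.
    apply Heps. apply (norm_compat1 (V := C_NormedModule)). change (Cmod (u n - l) < eps). apply HN. lia. }
  assert (Hc : cauchy F).
  { intros eps. exists l. apply Hl. exists eps. auto. }
  pose proof (@complete_cauchy (CompleteNormedModule.CompleteSpace _ C_CompleteNormedModule) F HF Hc) as Hlim.
  apply (is_filter_lim_unique (F := F)).
  - apply Proper_StrongProper in HF. auto.
  - intros P [eps Heps]. eapply filter_imp. 2: apply (Hlim eps). auto.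
  - auto.
Qed.

Lemma Cmod_cexp z : Cmod (cexp z) = exp (Re z).
Proof.
  unfold cexp, Cmod; simpl.
  pose proof (sin2_cos2 (Im z)) as Hs; unfold Rsqr in Hs.
  replace (exp (Re z) * cos (Im z) * (exp (Re z) * cos (Im z) * 1) +
     exp (Re z) * sin (Im z) * (exp (Re z) * sin (Im z) * 1)) with (exp (Re z) ^ 2)
   by (first [transitivity (exp (Re z) ^ 2 * (sin (Im z) * sin (Im z) + cos (Im z) * cos (Im z))); [ring | rewrite Hs; ring] | transitivity (exp (Re z) ^ 2 * (sin (Im z) * sin (Im z) + cos (Im z) * cos (Im z))); [rewrite Hs; ring | ring]]).
  rewrite sqrt_pow2; auto. apply Rlt_le, exp_pos.
Qed.

Lemma cexp_plus a b : cexp (a + b)%C = (cexp a * cexp b)%C.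
Proof.
  unfold cexp; destruct a as [a1 a2], b as [b1 b2]; unfold Cmult, Cplus; simpl.
  rewrite exp_plus, cos_plus, sin_plus. apply injective_projections; simpl; ring.
Qed.

Lemma cexp_0 : cexp 0%C = 1%C.
Proof. unfold cexp; simpl. rewrite exp_0, cos_0, sin_0. apply injective_projections; simpl; ring. Qed.

Lemma cexp_neq0 z : cexp z <> 0%C.
Proof. intros H. assert (Cmod (cexp z) = 0) by (rewrite H; apply Cmod_0).
  rewrite Cmod_cexp in H0. pose proof (exp_pos (Re z)). lra. Qed.

Lemma cexp_R x : cexp (RtoC x) = RtoC (exp x).
Proof. unfold cexp; simpl. rewrite cos_0, sin_0. apply injective_projections; simpl; ring. Qed.

Lemma qpow_R q x : 0 < q -> qpow q (RtoC x) = RtoC (Rpower q x).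
Proof. intros hq. unfold qpow, Rpower. rewrite <- cexp_R. f_equal.
  unfold Cmult, RtoC; simpl. apply injective_projections; simpl; ring. Qed.

Lemma Cmod_qpow q w : Cmod (qpow q w) = Rpower q (Re w).
Proof. unfold qpow, Rpower. rewrite Cmod_cexp. f_equal. destruct w; unfold Cmult, RtoC; simpl. ring. Qed.

Lemma qpow_plus q a b : qpow q (a + b)%C = (qpow q a * qpow q b)%C.
Proof. unfold qpow. rewrite <- cexp_plus. f_equal. ring. Qed.

Fixpoint csum (f : nat -> C) (m : nat) : C :=
  match m with O => 0%C | S k => (csum f k + f k)%C end.
Fixpoint rsum (f : nat -> R) (m : nat) : R :=
  match m with O => 0 | S k => rsum f k + f k end.

Lemma sum_n_csum f M : sum_n f M = csum f (S M).
Proof.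
  induction M.
  - rewrite sum_O. simpl. apply injective_projections; simpl; ring.
  - rewrite sum_Sn, IHM. reflexivity.
Qed.

Lemma csum_minus f g m : csum (fun k => f k - g k)%C m = (csum f m - csum g m)%C.
Proof. induction m; simpl. - apply injective_projections; simpl; ring. - rewrite IHm. ring. Qed.

Lemma Cmod_csum f m : Cmod (csum f m) <= rsum (fun k => Cmod (f k)) m.
Proof. induction m; simpl. - rewrite Cmod_0; lra. - eapply Rle_trans. apply Cmod_triangle. lra. Qed.

Lemma csum_split f a b : csum f (a + b) = (csum f a + csum (fun k => f (a + k)%nat) b)%C.
Proof. induction b; simpl.
  - rewrite Nat.add_0_r. apply injective_projections; simpl; ring.
  - rewrite Nat.add_succ_r. simpl. rewrite IHb. ring. Qed.

Lemma rsum_le f g m : (forall k, (k < m)%nat -> f k <= g k) -> rsum f m <= rsum g m.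
Proof. induction m; simpl; intros H. lra. assert (f m <= g m) by (apply H; lia).
  assert (rsum f m <= rsum g m) by (apply IHm; intros; apply H; lia). lra. Qed.

Lemma rsum_plus f g m : rsum (fun k => f k + g k) m = rsum f m + rsum g m.
Proof. induction m; simpl; lra. Qed.

Lemma rsum_scal c f m : rsum (fun k => c * f k) m = c * rsum f m.
Proof. induction m; simpl. ring. rewrite IHm; ring. Qed.

Lemma rsum_geom r m : rsum (fun k => r ^ k) m * (1 - r) = 1 - r ^ m.
Proof. induction m; simpl. ring. rewrite Rmult_plus_distr_r, IHm. ring. Qed.

Lemma geom_tail a b : rsum (fun k => (1/2) ^ (a + k)) b <= 2 * (1/2) ^ a.
Proof.
  replace (rsum (fun k => (1/2) ^ (a + k)) b) with ((1/2)^a * rsum (fun k => (1/2)^k) b).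
  2:{ rewrite <- rsum_scal. f_equal. apply functional_extensionality. intros; rewrite pow_add; auto. }
  pose proof (rsum_geom (1/2) b). assert (0 < (1/2)^b) by (apply pow_lt; lra).
  assert (0 < (1/2)^a) by (apply pow_lt; lra).
  assert (rsum (fun k => (1/2)^k) b <= 2) by lra. nra.
Qed.

Lemma csum_zero_tail (f : nat -> C) n j : (forall k, (n < k)%nat -> f k = 0%C) -> csum f (S n + j) = csum f (S n).
Proof. intros H. induction j. rewrite Nat.add_0_r; auto.
  rewrite Nat.add_succ_r. simpl. simpl in IHj. rewrite IHj, (H (S (n + j))) by lia. apply injective_projections; simpl; ring. Qed.


Lemma head_unif (Rad : R) (t : nat -> nat -> C -> C) (u : nat -> C -> C) :
  (forall k e, 0 < e -> exists N, forall n z, (N <= n)%nat -> Cmod z <= Rad -> Cmod (t n k z - u k z) <= e) ->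
  forall k2 e, 0 < e -> exists N, forall n z, (N <= n)%nat -> Cmod z <= Rad ->
    rsum (fun k => Cmod (t n k z - u k z)) k2 <= e.
Proof.
  intros H k2. induction k2; intros e He.
  - exists O. intros; simpl; lra.
  - destruct (IHk2 (e/2)) as [N1 HN1]. lra.
    destruct (H k2 (e/2)) as [N2 HN2]. lra.
    exists (max N1 N2). intros n z Hn Hz. simpl.
    assert (rsum (fun k => Cmod (t n k z - u k z)) k2 <= e/2) by (apply HN1; auto; lia).
    assert (Cmod (t n k2 z - u k2 z) <= e/2) by (apply HN2; auto; lia). lra.
Qed.

Lemma uniform_series (Rad : R) (t : nat -> nat -> C -> C) (u : nat -> C -> C) (C0 : R) (N0 : nat) :
  0 <= C0 ->
  (forall n k z, (N0 <= n)%nat -> Cmod z <= Rad -> Cmod (t n k z) <= C0 * (1/2)^k /\ Cmod (u k z) <= C0 * (1/2)^k) ->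
  (forall n k z, (n < k)%nat -> t n k z = 0%C) ->
  (forall k e, 0 < e -> exists N, forall n z, (N <= n)%nat -> Cmod z <= Rad -> Cmod (t n k z - u k z) <= e) ->
  forall eps, 0 < eps -> exists N, forall n z, (N <= n)%nat -> Cmod z <= Rad ->
     forall L, (forall e, 0 < e -> exists M, forall m, (M <= m)%nat -> Cmod (csum (fun k => u k z) m - L) < e) ->
     Cmod (csum (fun k => t n k z) (S n) - L) < eps.
Proof.
  intros HC0 Hb Hz Hk eps Heps.
  destruct (pow_lt_1_zero (1/2)) with (y := eps / (8 * (C0 + 1))) as [k2 Hk2].
  { rewrite Rabs_pos_eq; lra. } { apply Rdiv_lt_0_compat; lra. }
  specialize (Hk2 k2 (le_n _)). rewrite Rabs_pos_eq in Hk2 by (apply pow_le; lra).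
  destruct (head_unif Rad t u Hk k2 (eps/4)) as [N1 HN1]. lra.
  exists (max N0 (max N1 k2)). intros n z Hn HzR L HL.
  destruct (HL (eps/4)) as [M HM]. lra.
  set (m := max M (S n)).
  assert (Em : csum (fun k => t n k z) (S n) = csum (fun k => t n k z) m).
  { unfold m. replace (max M (S n)) with (S n + (max M (S n) - S n))%nat by lia.
    symmetry. apply csum_zero_tail. intros; apply Hz; auto. }
  rewrite Em.
  assert (HmL : Cmod (csum (fun k => u k z) m - L) < eps/4) by (apply HM; unfold m; lia).
  replace (csum (fun k => t n k z) m - L)%C with
    (csum (fun k => t n k z - u k z)%C m + (csum (fun k => u k z) m - L))%C
    by (rewrite csum_minus; ring).
  eapply Rle_lt_trans. apply Cmod_triangle.
  replace m with (k2 + (m - k2))%nat by (unfold m; lia).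
  rewrite csum_split.
  eapply Rle_lt_trans. apply Rplus_le_compat_r. apply Cmod_triangle.
  assert (H1 : Cmod (csum (fun k => t n k z - u k z)%C k2) <= eps/4).
  { eapply Rle_trans. apply Cmod_csum. apply HN1; auto; lia. }
  assert (H2 : Cmod (csum (fun k => t n (k2 + k)%nat z - u (k2 + k)%nat z)%C (m - k2)) <= 4 * C0 * (1/2)^k2).
  { eapply Rle_trans. apply Cmod_csum.
    eapply Rle_trans. apply rsum_le with (g := fun k => 2 * C0 * (1/2)^(k2 + k)).
    { intros k _. destruct (Hb n (k2 + k)%nat z) as [Ht Hu]; auto. lia.
      unfold Cminus. eapply Rle_trans. apply Cmod_triangle. rewrite Cmod_opp. lra. }
    rewrite rsum_scal. pose proof (geom_tail k2 (m - k2)). nra. }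
  assert (4 * C0 * (1/2)^k2 <= eps / 2).
  { assert (C0 * (1/2)^k2 <= (C0 + 1) * (eps / (8 * (C0 + 1)))).
    { apply Rmult_le_compat; try lra. apply pow_le; lra. }
    replace ((C0 + 1) * (eps / (8 * (C0 + 1)))) with (eps / 8) in H by (field; lra). lra. }
  replace (k2 + (m - k2))%nat with m by (unfold m; lia). lra.
Qed.

Definition Ccv (x : nat -> C) (l : C) :=
  forall eps, 0 < eps -> exists N, forall n, (N <= n)%nat -> Cmod (x n - l) < eps.

Lemma Ccv_const (c : C) : Ccv (fun _ => c) c.
Proof. intros e He; exists O; intros. cbv beta. replace (c - c)%C with (RtoC 0) by ring. rewrite Cmod_0; auto. Qed.

Lemma Ccv_ext (x y : nat -> C) (l : C) : (exists N, forall n, (N <= n)%nat -> x n = y n) -> Ccv x l -> Ccv y l.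
Proof. intros [N0 H0] H e He. destruct (H e He) as [N HN]. exists (max N0 N). intros n Hn.
  rewrite <- H0 by lia. apply HN; lia. Qed.

Lemma Ccv_plus (x y : nat -> C) (a b : C) : Ccv x a -> Ccv y b -> Ccv (fun n => x n + y n)%C (a + b)%C.
Proof. intros Hx Hy e He. destruct (Hx (e/2)) as [N1 H1]; [lra|]. destruct (Hy (e/2)) as [N2 H2]; [lra|].
  exists (max N1 N2). intros n Hn.
  replace (x n + y n - (a + b))%C with ((x n - a) + (y n - b))%C by ring.
  eapply Rle_lt_trans. apply Cmod_triangle. specialize (H1 n ltac:(lia)). specialize (H2 n ltac:(lia)). lra. Qed.

Lemma Ccv_bounded (x : nat -> C) (a : C) : Ccv x a -> exists N, forall n, (N <= n)%nat -> Cmod (x n) <= Cmod a + 1.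
Proof. intros H. destruct (H 1) as [N HN]; [lra|]. exists N. intros n Hn.
  replace (x n) with ((x n - a) + a)%C by ring. eapply Rle_trans. apply Cmod_triangle.
  specialize (HN n Hn). lra. Qed.

Lemma Ccv_mult (x y : nat -> C) (a b : C) : Ccv x a -> Ccv y b -> Ccv (fun n => x n * y n)%C (a * b)%C.
Proof. intros Hx Hy e He.
  destruct (Ccv_bounded y b Hy) as [N0 H0].
  set (M := Cmod b + 1). assert (HM : 0 < M) by (unfold M; pose proof (Cmod_ge_0 b); lra).
  set (Ka := Cmod a + 1). assert (HKa : 0 < Ka) by (unfold Ka; pose proof (Cmod_ge_0 a); lra).
  destruct (Hx (e/(3*M))) as [N1 H1]. { apply Rdiv_lt_0_compat; lra. }
  destruct (Hy (e/(3*Ka))) as [N2 H2]. { apply Rdiv_lt_0_compat; lra. }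
  exists (max N0 (max N1 N2)). intros n Hn.
  replace (x n * y n - a * b)%C with ((x n - a) * y n + a * (y n - b))%C by ring.
  eapply Rle_lt_trans. apply Cmod_triangle. rewrite !Cmod_mult.
  specialize (H0 n ltac:(lia)). specialize (H1 n ltac:(lia)). specialize (H2 n ltac:(lia)).
  assert (A1 : Cmod (x n - a) * Cmod (y n) <= e/(3*M) * M).
  { apply Rmult_le_compat; try apply Cmod_ge_0. apply Rlt_le, H1. unfold M; lra. }
  assert (A2 : Cmod a * Cmod (y n - b) <= Ka * (e/(3*Ka))).
  { apply Rmult_le_compat; try apply Cmod_ge_0. unfold Ka; lra. apply Rlt_le, H2. }
  replace (e/(3*M) * M) with (e/3) in A1 by (field; lra).
  replace (Ka * (e/(3*Ka))) with (e/3) in A2 by (field; lra).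
  lra. Qed.

Lemma Ccv_inv (y : nat -> C) (b : C) : b <> 0%C -> Ccv y b -> Ccv (fun n => / y n)%C (/ b)%C.
Proof. intros Hb Hy e He.
  assert (Hmb : 0 < Cmod b) by (apply Cmod_gt_0; exact Hb).
  destruct (Hy (Cmod b / 2)) as [N0 H0]; [lra|].
  destruct (Hy (e * (Cmod b * Cmod b) / 2)) as [N1 H1]. { apply Rdiv_lt_0_compat; [|lra]. apply Rmult_lt_0_compat; nra. }
  exists (max N0 N1). intros n Hn. specialize (H0 n ltac:(lia)). specialize (H1 n ltac:(lia)).
  assert (Hy1 : Cmod b / 2 <= Cmod (y n)).
  { assert (Cmod b <= Cmod (y n - b) + Cmod (y n)).
    { replace b with ((- (y n - b)) + y n)%C at 1 by ring. eapply Rle_trans. apply Cmod_triangle. rewrite Cmod_opp. lra. }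
    lra. }
  assert (Hyn : y n <> 0%C). { intros E. rewrite E, Cmod_0 in Hy1. lra. }
  replace (/ y n - / b)%C with ((b - y n) / (y n * b))%C by (field; auto).
  rewrite Cmod_div by (apply Cmult_neq_0; auto). rewrite Cmod_mult.
  replace (b - y n)%C with (- (y n - b))%C by ring. rewrite Cmod_opp.
  apply Rmult_lt_reg_r with (Cmod (y n) * Cmod b). nra.
  unfold Rdiv. rewrite Rmult_assoc, Rinv_l by nra. rewrite Rmult_1_r.
  apply Rlt_le_trans with (e * (Cmod b * Cmod b) / 2); auto.
  assert (e * (Cmod b * Cmod b) / 2 = e * (Cmod b / 2 * Cmod b)) by field. rewrite H.
  apply Rmult_le_compat_l; [lra|]. apply Rmult_le_compat_r; lra.
Qed.

Lemma Ccv_div (x y : nat -> C) (a b : C) : b <> 0%C -> Ccv x a -> Ccv y b -> Ccv (fun n => x n / y n)%C (a / b)%C.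
Proof. intros Hb Hx Hy. unfold Cdiv. apply Ccv_mult; auto. apply Ccv_inv; auto. Qed.

Lemma Ccv_RtoC (x : nat -> R) (l : R) : is_lim_seq x l -> Ccv (fun n => RtoC (x n)) (RtoC l).
Proof. intros H e He. apply is_lim_seq_spec in H. unfold is_lim_seq' in H. destruct (H (mkposreal e He)) as [N HN].
  exists N. intros n Hn. rewrite <- RtoC_minus, Cmod_R. apply HN. unfold ge; lia. Qed.

Lemma Ccv_unique_le (x : nat -> C) (a : C) B : Ccv x a -> (exists N, forall n, (N <= n)%nat -> Cmod (x n) <= B) -> Cmod a <= B.
Proof. intros H [N HN]. apply Rnot_lt_le. intros Hlt.
  destruct (H (Cmod a - B)) as [N1 H1]; [lra|].
  specialize (H1 (max N N1) ltac:(lia)). specialize (HN (max N N1) ltac:(lia)).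
  assert (Cmod a <= Cmod (x (max N N1)) + Cmod (a - x (max N N1))).
  { replace a with (x (max N N1) + (a - x (max N N1)))%C at 1 by ring. apply Cmod_triangle. }
  replace (a - x (max N N1))%C with (- (x (max N N1) - a))%C in H0 by ring. rewrite Cmod_opp in H0. lra.
Qed.

Lemma pow_le1 x n : 0 <= x <= 1 -> x ^ n <= 1.
Proof. intros H. induction n; simpl. lra. nra. Qed.

Lemma pow_decr x m n : 0 <= x <= 1 -> (m <= n)%nat -> x ^ n <= x ^ m.
Proof. intros H Hmn. replace n with (m + (n - m))%nat by lia. rewrite pow_add.
  pose proof (pow_le1 x (n - m) H). pose proof (pow_le x m ltac:(lra)). pose proof (pow_le x (n-m) ltac:(lra)). nra. Qed.

Lemma prodC_S_l (f : nat -> C) m : prodC f (S m) = (f O * prodC (fun i => f (S i)) m)%C.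
Proof. induction m. simpl. ring. change (prodC f (S (S m))) with (prodC f (S m) * f (S m))%C.
  rewrite IHm. simpl. ring. Qed.

Lemma prodR_S_l (f : nat -> R) m : prodR f (S m) = f O * prodR (fun i => f (S i)) m.
Proof. induction m. simpl. ring. change (prodR f (S (S m))) with (prodR f (S m) * f (S m)).
  rewrite IHm. simpl. ring. Qed.

Lemma Cmod_prodC (f : nat -> C) m : Cmod (prodC f m) = prodR (fun i => Cmod (f i)) m.
Proof. induction m; simpl. apply Cmod_1. rewrite Cmod_mult, IHm. auto. Qed.

Lemma prodR_nonneg (f : nat -> R) m : (forall i, (i < m)%nat -> 0 <= f i) -> 0 <= prodR f m.
Proof. induction m; simpl; intros H. lra. apply Rmult_le_pos. apply IHm; intros; apply H; lia. apply H; lia. Qed.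

Lemma prodR_pos (f : nat -> R) m : (forall i, (i < m)%nat -> 0 < f i) -> 0 < prodR f m.
Proof. induction m; simpl; intros H. lra. apply Rmult_lt_0_compat. apply IHm; intros; apply H; lia. apply H; lia. Qed.

Lemma prodR_le (f g : nat -> R) m : (forall i, (i < m)%nat -> 0 <= f i <= g i) -> prodR f m <= prodR g m.
Proof. induction m; simpl; intros H. lra. apply Rmult_le_compat.
  apply prodR_nonneg; intros; apply H; lia. apply H; lia. apply IHm; intros; apply H; lia. apply H; lia. Qed.

Lemma prodR_const (c : R) m : prodR (fun _ => c) m = c ^ m.
Proof. induction m; simpl. auto. rewrite IHm. ring. Qed.

Lemma prodR_mult (f g : nat -> R) m : prodR (fun i => f i * g i) m = prodR f m * prodR g m.
Proof. induction m; simpl. ring. rewrite IHm. ring. Qed.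

Lemma prodR_ext (f g : nat -> R) m : (forall i, (i < m)%nat -> f i = g i) -> prodR f m = prodR g m.
Proof. induction m; simpl; intros H. auto. rewrite IHm. rewrite H. auto. lia. intros; apply H; lia. Qed.

Lemma prodC_ext (f g : nat -> C) m : (forall i, (i < m)%nat -> f i = g i) -> prodC f m = prodC g m.
Proof. induction m; simpl; intros H. auto. rewrite IHm. rewrite H. auto. lia. intros; apply H; lia. Qed.

Lemma prodR_zero (f : nat -> R) m i : (i < m)%nat -> f i = 0 -> prodR f m = 0.
Proof. induction m; simpl; intros Hi H. lia. destruct (Nat.eq_dec i m). subst. rewrite H. ring.
  rewrite IHm; auto. ring. lia. Qed.

Lemma prodC_RtoC (f : nat -> R) m : prodC (fun i => RtoC (f i)) m = RtoC (prodR f m).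
Proof. induction m; simpl. auto. rewrite IHm, RtoC_mult. auto. Qed.

Lemma prodC_one m : prodC (fun _ => RtoC 1) m = RtoC 1.
Proof. induction m; simpl. auto. rewrite IHm. ring. Qed.

Lemma Ccv_prodC (f : nat -> nat -> C) (l : nat -> C) m :
  (forall i, (i < m)%nat -> Ccv (fun n => f n i) (l i)) -> Ccv (fun n => prodC (f n) m) (prodC l m).
Proof. induction m; simpl; intros H. apply Ccv_const. apply Ccv_mult. apply IHm; intros; apply H; lia. apply H; lia. Qed.

Lemma qpoch_RtoC x q k : qpoch (RtoC x) q k = RtoC (prodR (fun j => 1 - x * q ^ j) k).
Proof. unfold qpoch. rewrite <- prodC_RtoC. apply prodC_ext. intros. rewrite RtoC_minus, RtoC_mult. auto. Qed.

Lemma qpoch_0 q k : qpoch (RtoC 0) q k = RtoC 1.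
Proof. rewrite qpoch_RtoC. rewrite (prodR_ext _ (fun _ => 1)). rewrite prodR_const, pow1. auto. intros; ring. Qed.

Lemma Ccv_qpoch (a : nat -> C) (l : C) q k : Ccv a l -> Ccv (fun n => qpoch (a n) q k) (qpoch l q k).
Proof. intros H. unfold qpoch. apply Ccv_prodC. intros i _.
  apply Ccv_plus. apply Ccv_const. 
  apply (Ccv_ext (fun n => a n * (- RtoC (q ^ i)))%C). exists O. intros; ring.
  replace (- (l * RtoC (q ^ i)))%C with (l * (- RtoC (q ^ i)))%C by ring.
  apply Ccv_mult; auto. apply Ccv_const. Qed.

Lemma Cmod_qpoch_le (a : C) q k : 0 < q < 1 -> Cmod (qpoch a q k) <= (1 + Cmod a) ^ k.
Proof. intros hq. unfold qpoch. rewrite Cmod_prodC, <- prodR_const. apply prodR_le. intros i _. split. apply Cmod_ge_0.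
  eapply Rle_trans. unfold Cminus. apply Cmod_triangle. rewrite Cmod_opp, Cmod_1, Cmod_mult, Cmod_R.
  rewrite Rabs_pos_eq by (apply pow_le; lra). pose proof (pow_le q i ltac:(lra)). 
  assert (q ^ i <= 1) by (apply pow_le1; lra). pose proof (Cmod_ge_0 a). nra. Qed.

Lemma Cmod_qpoch_ge_m (a : C) q k m : 0 <= m -> (forall j, m <= Cmod (RtoC 1 - a * RtoC (q ^ j))) -> m ^ k <= Cmod (qpoch a q k).
Proof. intros hm H. unfold qpoch. rewrite Cmod_prodC, <- prodR_const. apply prodR_le. intros; split; auto. Qed.

Lemma Cmod_1_minus_ge (w : C) : 1 - Cmod w <= Cmod (RtoC 1 - w).
Proof. assert (Cmod (RtoC 1) <= Cmod (RtoC 1 - w) + Cmod w).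
  { replace (RtoC 1) with ((RtoC 1 - w) + w)%C at 1 by ring. apply Cmod_triangle. }
  rewrite Cmod_1 in H. lra. Qed.

Lemma Cmod_qpoch_ge (a : C) q k : 0 < q < 1 -> Cmod a <= q -> (1 - q) ^ k <= Cmod (qpoch a q k).
Proof. intros hq ha. apply Cmod_qpoch_ge_m. lra. intros j.
  eapply Rle_trans. 2: apply Cmod_1_minus_ge. rewrite Cmod_mult, Cmod_R, Rabs_pos_eq by (apply pow_le; lra).
  assert (q ^ j <= 1) by (apply pow_le1; lra). pose proof (Cmod_ge_0 a). pose proof (pow_le q j ltac:(lra)). nra. Qed.

Lemma Rpower_pos x y : 0 < Rpower x y.
Proof. unfold Rpower; apply exp_pos. Qed.

Lemma ln_lt0 q : 0 < q < 1 -> ln q < 0.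
Proof. intros hq. rewrite <- ln_1. apply ln_increasing; lra. Qed.

Lemma Rpower_decr q x y : 0 < q < 1 -> x <= y -> Rpower q y <= Rpower q x.
Proof. intros hq hxy. unfold Rpower. pose proof (ln_lt0 q hq).
  destruct (Req_dec x y). subst; lra. left. apply exp_increasing. nra. Qed.

Lemma Rpower_lt1 q b : 0 < q < 1 -> 0 < b -> Rpower q b < 1.
Proof. intros hq hb. unfold Rpower. rewrite <- exp_0. apply exp_increasing. pose proof (ln_lt0 q hq). nra. Qed.

Lemma Rpower_le1 q b : 0 < q < 1 -> 0 <= b -> Rpower q b <= 1.
Proof. intros hq hb. destruct (Req_dec b 0). subst. rewrite Rpower_O by lra. lra. left; apply Rpower_lt1; lra. Qed.

Lemma Rpower_INR q n : 0 < q -> Rpower q (INR n) = q ^ n.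
Proof. intros; apply Rpower_pow; auto. Qed.

Lemma lim_pow q : 0 < q < 1 -> is_lim_seq (fun n => q ^ n) 0.
Proof. intros hq. apply is_lim_seq_geom. rewrite Rabs_pos_eq; lra. Qed.

Lemma lim_qnum x : 0 < x < 1 -> is_lim_seq (fun n => qnum x (INR n)) (1 / (1 - x)).
Proof. intros hx. unfold qnum.
  apply is_lim_seq_ext with (fun n => (1 - x ^ n) / (1 - x)).
  { intros n. rewrite Rpower_INR by lra. auto. }
  assert (H := is_lim_seq_minus' _ _ 1 0 (is_lim_seq_const 1) (lim_pow x hx)). rewrite Rminus_0_r in H.
  apply is_lim_seq_div'; auto. apply is_lim_seq_const. lra. Qed.

Lemma lim_prodR (f : nat -> nat -> R) (l : nat -> R) m :
  (forall i, (i < m)%nat -> is_lim_seq (fun n => f n i) (l i)) -> is_lim_seq (fun n => prodR (f n) m) (prodR l m).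
Proof. induction m; simpl; intros H. apply is_lim_seq_const. apply is_lim_seq_mult'. apply IHm; intros; apply H; lia. apply H; lia. Qed.

Lemma prodR_inv (f : nat -> R) m : prodR (fun i => / f i) m = / prodR f m.
Proof. induction m; simpl. field. rewrite IHm, Rinv_mult. auto. Qed.

Lemma prodR_div (f : nat -> R) d m : prodR (fun i => f i / d) m = prodR f m / d ^ m.
Proof. unfold Rdiv. rewrite prodR_mult, prodR_const, pow_inv. auto. Qed.

Lemma prodR_pow_sum q k : prodR (fun j => q ^ j) k = q ^ (Nat.div (k * (k - 1)) 2).
Proof. induction k. simpl. auto. simpl prodR. rewrite IHk, <- pow_add. f_equal.
  destruct k. simpl. auto.
  replace (S (S k) * (S (S k) - 1))%nat with (S k * (S k - 1) + S k * 2)%nat by (simpl; nia).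
  rewrite Nat.div_add by lia. auto. Qed.

Definition lamf q s alpha (a c : nat -> R) (n : nat) : R :=
    Rpower q (INR n + alpha) * prodR (fun j => qnum (Rpower q (c j)) (INR n)) (s - 1)
    / (qnum q (INR n) * prodR (fun j => qnum (Rpower q (a j)) (INR n)) (s - 1))
    * (q - 1).
Definition Ltf q s alpha (a c : nat -> R) (n : nat) : R :=
    Rpower q alpha * prodR (fun j => qnum (Rpower q (c j)) (INR n)) (s - 1)
    / (qnum q (INR n) * prodR (fun j => qnum (Rpower q (a j)) (INR n)) (s - 1))
    * (q - 1).
Definition muf q s alpha (a c : nat -> R) : R :=
    Rpower q alpha * prodR (fun j => 1 / (1 - Rpower q (c j))) (s - 1)
    / (1 / (1 - q) * prodR (fun j => 1 / (1 - Rpower q (a j))) (s - 1))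
    * (q - 1).
Definition Af q s (a c : nat -> R) : R :=
  prodR (fun j => qnum q (a j)) (s - 1) / prodR (fun j => qnum q (c j)) (s - 1).

Lemma lamf_eq q s alpha a c n : 0 < q -> lamf q s alpha a c n = q ^ n * Ltf q s alpha a c n.
Proof. intros hq. unfold lamf, Ltf. rewrite Rpower_plus, Rpower_INR by auto. unfold Rdiv. ring. Qed.

Lemma lim_Lt q s alpha a c : 0 < q < 1 ->
  (forall j, (j < s - 1)%nat -> 0 < a j) -> (forall j, (j < s - 1)%nat -> 0 < c j) ->
  is_lim_seq (Ltf q s alpha a c) (muf q s alpha a c).
Proof. intros hq ha hc. unfold Ltf, muf.
  apply is_lim_seq_mult'. 2: apply is_lim_seq_const.
  apply is_lim_seq_div'.
  - apply is_lim_seq_mult'. apply is_lim_seq_const.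
    apply lim_prodR. intros i Hi. apply lim_qnum. split. apply Rpower_pos. apply Rpower_lt1; auto.
  - apply is_lim_seq_mult'. apply lim_qnum; auto.
    apply lim_prodR. intros i Hi. apply lim_qnum. split. apply Rpower_pos. apply Rpower_lt1; auto.
  - apply Rmult_integral_contrapositive. split.
    + apply Rgt_not_eq. apply Rdiv_lt_0_compat; lra.
    + apply Rgt_not_eq. apply prodR_pos. intros i Hi. apply Rdiv_lt_0_compat. lra.
      pose proof (Rpower_lt1 q (a i) hq (ha i Hi)). lra.
Qed.

Lemma muf_eq q s alpha a c : 0 < q < 1 ->
  (forall j, (j < s - 1)%nat -> 0 < a j) -> (forall j, (j < s - 1)%nat -> 0 < c j) ->
  muf q s alpha a c = - Af q s a c * (q - 1) ^ 2 * Rpower q alpha.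
Proof. intros hq ha hc. unfold muf, Af, qnum.
  rewrite !prodR_div.
  rewrite (prodR_ext (fun j => 1 / (1 - Rpower q (c j))) (fun j => / (1 - Rpower q (c j)))) by (intros; unfold Rdiv; ring).
  rewrite (prodR_ext (fun j => 1 / (1 - Rpower q (a j))) (fun j => / (1 - Rpower q (a j)))) by (intros; unfold Rdiv; ring).
  rewrite !prodR_inv.
  assert (Ha : 0 < prodR (fun j => 1 - Rpower q (a j)) (s - 1)).
  { apply prodR_pos. intros i Hi. pose proof (Rpower_lt1 q (a i) hq (ha i Hi)). lra. }
  assert (Hc : 0 < prodR (fun j => 1 - Rpower q (c j)) (s - 1)).
  { apply prodR_pos. intros i Hi. pose proof (Rpower_lt1 q (c i) hq (hc i Hi)). lra. }
  assert (0 < (1 - q) ^ (s - 1)) by (apply pow_lt; lra).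
  field. repeat split; lra.
Qed.

Definition numf q (a : nat -> R) (b : nat -> C) (n i : nat) : C :=
  match i with O => qpow q (- RtoC (INR n)) | S j => qpow q (RtoC (a j * INR n) + b j) end.
Definition denf q (alpha : R) (c : nat -> R) (d : nat -> C) (n i : nat) : C :=
  match i with O => qpow q (RtoC alpha) | S j => qpow q (RtoC (c j * INR n) + d j) end.
Definition Xk q k := (-1) ^ k * q ^ (Nat.div (k * (k - 1)) 2).

Lemma Cpow_mult_l (x y : C) k : ((x * y) ^ k = x ^ k * y ^ k)%C.
Proof. induction k; simpl. ring. rewrite IHk. ring. Qed.

Lemma powerRZ_one x : powerRZ x 1 = x.
Proof. simpl. ring. Qed.
Lemma powerRZ_two x : powerRZ x 2 = x * x.
Proof. simpl. ring. Qed.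

Lemma t_core q s alpha a c n k : 0 < q ->
  (qpoch (qpow q (- RtoC (INR n))) q k * (RtoC (lamf q s alpha a c n)) ^ k)%C
  = RtoC (prodR (fun j => Ltf q s alpha a c n * (q ^ n - q ^ j)) k).
Proof. intros hq. rewrite <- RtoC_opp, qpow_R by auto. rewrite qpoch_RtoC, <- RtoC_pow, <- RtoC_mult.
  f_equal. rewrite <- prodR_const, <- prodR_mult. apply prodR_ext. intros j _.
  rewrite lamf_eq by auto. rewrite Rpower_Ropp, Rpower_INR by auto.
  assert (0 < q ^ n) by (apply pow_lt; auto). field. lra. Qed.

Lemma tt_decomp q s' alpha a b c d n k z : 0 < q ->
  phi_term (S s') (S s') (numf q a b n) (denf q alpha c d n) q (RtoC (lamf q (S s') alpha a c n) * z) k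
  = (RtoC (prodR (fun j => (Ltf q (S s') alpha a c n * (q ^ n - q ^ j))%R) k)
     * prodC (fun j => qpoch (numf q a b n (S j)) q k) s'
     / (qpoch (qpow q (RtoC alpha)) q k * prodC (fun j => qpoch (denf q alpha c d n (S j)) q k) s')
     * RtoC (Xk q k) * z ^ k / qpoch (RtoC q) q k)%C.
Proof. intros hq. unfold phi_term.
  rewrite <- (t_core q (S s') alpha a c n k hq).
  rewrite !prodC_S_l. simpl numf. simpl denf.
  replace (1 + Z.of_nat (S s') - Z.of_nat (S s'))%Z with 1%Z by lia. rewrite powerRZ_one.
  rewrite Cpow_mult_l. unfold Xk. unfold Cdiv. ring. Qed.

Lemma uu_decomp q alpha mu k z :
  phi_term 0 1 (fun _ => RtoC 0) (fun _ => qpow q (RtoC alpha)) q (RtoC mu * z) k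
  = (RtoC (Xk q k * Xk q k * mu ^ k)%R / qpoch (qpow q (RtoC alpha)) q k * z ^ k / qpoch (RtoC q) q k)%C.
Proof. unfold phi_term. simpl prodC.
  replace (1 + Z.of_nat 1 - Z.of_nat 0)%Z with 2%Z by reflexivity. rewrite powerRZ_two.
  unfold Xk. rewrite Cpow_mult_l, !RtoC_mult, <- RtoC_pow, !Cmult_1_l. unfold Cdiv. ring. Qed.

Lemma Ccv_eq (x : nat -> C) l l' : Ccv x l -> l = l' -> Ccv x l'.
Proof. intros H E; subst; auto. Qed.

Lemma Rpower_lin q a0 b0 n : 0 < q -> Rpower q (a0 * INR n + b0) = Rpower q a0 ^ n * Rpower q b0.
Proof. intros hq. rewrite Rpower_plus, <- Rpower_mult, Rpower_INR by apply Rpower_pos. auto. Qed.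

Lemma Re_RtoC_plus x (b0 : C) : Re (RtoC x + b0)%C = x + Re b0.
Proof. destruct b0; simpl; auto. Qed.

Lemma Ccv_qpow0 q (a0 : R) (b0 : C) : 0 < q < 1 -> 0 < a0 ->
  Ccv (fun n => qpow q (RtoC (a0 * INR n) + b0)) (RtoC 0).
Proof. intros hq ha.
  assert (H : is_lim_seq (fun n => Rpower q a0 ^ n * Rpower q (Re b0)) 0).
  { replace 0 with (0 * Rpower q (Re b0)) by ring. apply is_lim_seq_mult'. 2: apply is_lim_seq_const.
    apply lim_pow. split. apply Rpower_pos. apply Rpower_lt1; auto. }
  apply Ccv_RtoC in H. intros e He. destruct (H e He) as [N HN]. exists N. intros n Hn.
  specialize (HN n Hn). rewrite <- RtoC_minus, Cmod_R in HN.
  replace (qpow q (RtoC (a0 * INR n) + b0) - RtoC 0)%C with (qpow q (RtoC (a0 * INR n) + b0)) by ring.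
  rewrite Cmod_qpow, Re_RtoC_plus, Rpower_lin by lra. rewrite Rminus_0_r in HN.
  rewrite Rabs_pos_eq in HN; auto. apply Rmult_le_pos. apply pow_le, Rlt_le, Rpower_pos. apply Rlt_le, Rpower_pos. Qed.

Lemma coef_conv q s' alpha a b c d k : 0 < q < 1 ->
  (forall j, (j < S s' - 1)%nat -> 0 < a j) -> (forall j, (j < S s' - 1)%nat -> 0 < c j) ->
  qpoch (qpow q (RtoC alpha)) q k <> RtoC 0 -> qpoch (RtoC q) q k <> RtoC 0 ->
  Ccv (fun n => phi_term (S s') (S s') (numf q a b n) (denf q alpha c d n) q (RtoC (lamf q (S s') alpha a c n) * RtoC 1) k)
      (phi_term 0 1 (fun _ => RtoC 0) (fun _ => qpow q (RtoC alpha)) q (RtoC (muf q (S s') alpha a c) * RtoC 1) k).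
Proof. intros hq ha hc HD HQ.
  rewrite uu_decomp.
  eapply Ccv_ext. { exists O. intros n _. symmetry. apply tt_decomp. lra. }
  set (mu := muf q (S s') alpha a c).
  apply Ccv_eq with
    (RtoC (prodR (fun j => (mu * (0 - q ^ j))%R) k) * RtoC 1 / (qpoch (qpow q (RtoC alpha)) q k * RtoC 1)
     * RtoC (Xk q k) * RtoC 1 ^ k / qpoch (RtoC q) q k)%C.
  2:{ assert (E : prodR (fun j => (mu * (0 - q ^ j))%R) k * Xk q k = Xk q k * Xk q k * mu ^ k).
      { rewrite (prodR_ext _ (fun j => (- mu) * q ^ j)) by (intros; ring).
        rewrite prodR_mult, prodR_const, prodR_pow_sum. unfold Xk.
        replace (- mu) with (-1 * mu) by ring. rewrite Rpow_mult_distr. ring. }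
      rewrite <- E, RtoC_mult, !Cmult_1_r. unfold Cdiv. ring. }
  apply Ccv_div; [exact HQ | | apply Ccv_const].
  apply Ccv_mult; [ | apply Ccv_const].
  apply Ccv_mult; [ | apply Ccv_const].
  apply Ccv_div; [ rewrite Cmult_1_r; exact HD | | ].
  - apply Ccv_mult.
    + apply Ccv_RtoC. apply lim_prodR. intros i _. apply is_lim_seq_mult'.
      apply lim_Lt; auto. apply is_lim_seq_minus'. apply lim_pow; auto. apply is_lim_seq_const.
    + rewrite <- (prodC_one s'). apply Ccv_prodC. intros i Hi. simpl numf.
      rewrite <- (qpoch_0 q k). apply Ccv_qpoch. apply Ccv_qpow0; auto. apply ha. lia.
  - apply Ccv_mult. apply Ccv_const.
    rewrite <- (prodC_one s'). apply Ccv_prodC. intros i Hi. simpl denf.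
    rewrite <- (qpoch_0 q k). apply Ccv_qpoch. apply Ccv_qpow0; auto. apply hc. lia.
Qed.

Lemma ev_all (P : nat -> nat -> Prop) m :
  (forall j, (j < m)%nat -> exists N, forall n, (N <= n)%nat -> P j n) ->
  exists N, forall n, (N <= n)%nat -> forall j, (j < m)%nat -> P j n.
Proof. induction m; intros H.
  - exists O. intros; lia.
  - destruct IHm as [N1 H1]. intros; apply H; lia.
    destruct (H m) as [N2 H2]. lia.
    exists (max N1 N2). intros n Hn j Hj. destruct (Nat.eq_dec j m). subst. apply H2; lia. apply H1; lia. Qed.

Lemma fin_min (f : nat -> R) J : (forall j, (j < J)%nat -> 0 < f j) -> exists m, 0 < m /\ forall j, (j < J)%nat -> m <= f j.
Proof. induction J; intros H.
  - exists 1. split. lra. intros; lia.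
  - destruct IHJ as [m1 [Hm1 H1]]. intros; apply H; lia.
    exists (Rmin m1 (f J)). split. apply Rmin_pos; [auto | apply H; lia].
    intros j Hj. destruct (Nat.eq_dec j J). subst. apply Rmin_r.
    eapply Rle_trans. apply Rmin_l. apply H1; lia. Qed.

Lemma exists_N_ge a0 y : 0 < a0 -> exists N, forall n, (N <= n)%nat -> y <= a0 * INR n.
Proof. intros ha. destruct (INR_archimed a0 y) as [N HN]. lra. exists N. intros n Hn.
  apply le_INR in Hn. nra. Qed.

Lemma Rabs_prodR (f : nat -> R) m : Rabs (prodR f m) = prodR (fun i => Rabs (f i)) m.
Proof. induction m; simpl. apply Rabs_R1. rewrite Rabs_mult, IHm. auto. Qed.

Lemma prodR_ge_const (f : nat -> R) c m : 0 <= c -> (forall i, (i < m)%nat -> c <= f i) -> c ^ m <= prodR f m.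
Proof. intros. rewrite <- prodR_const. apply prodR_le. intros; split; auto. Qed.

Lemma alpha_lb q alpha : 0 < q < 1 -> (forall k : nat, alpha <> - INR k) ->
  exists m, 0 < m /\ forall j, m <= Cmod (RtoC 1 - qpow q (RtoC alpha) * RtoC (q ^ j)).
Proof. intros hq halpha.
  assert (E : forall j, Cmod (RtoC 1 - qpow q (RtoC alpha) * RtoC (q ^ j)) = Rabs (1 - Rpower q (alpha + INR j))).
  { intros j. rewrite qpow_R by lra. rewrite <- RtoC_mult, <- RtoC_minus, Cmod_R.
    rewrite Rpower_plus, Rpower_INR by lra. auto. }
  destruct (exists_N_ge 1 (1 - alpha)) as [J HJ]. lra.
  destruct (fin_min (fun j => Rabs (1 - Rpower q (alpha + INR j))) J) as [m1 [Hm1 H1]].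
  { intros j Hj. apply Rabs_pos_lt. intros Hc.
    assert (Rpower q (alpha + INR j) = exp 0) by (rewrite exp_0; lra).
    unfold Rpower in H. apply exp_inv in H. pose proof (ln_lt0 q hq).
    assert (alpha + INR j = 0) by nra. apply (halpha j). lra. }
  exists (Rmin m1 (1 - q)). split. apply Rmin_pos; lra.
  intros j. rewrite E. destruct (Nat.lt_ge_cases j J).
  - eapply Rle_trans. apply Rmin_l. apply H1; auto.
  - eapply Rle_trans. apply Rmin_r. specialize (HJ j H).
    assert (Rpower q (alpha + INR j) <= Rpower q 1) by (apply Rpower_decr; lra).
    rewrite Rpower_1 in H0 by lra. pose proof (Rpower_pos q (alpha + INR j)).
    rewrite Rabs_pos_eq; lra. Qed.

Lemma tt_zero q s' alpha a b c d n k z : 0 < q -> (n < k)%nat ->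
  phi_term (S s') (S s') (numf q a b n) (denf q alpha c d n) q (RtoC (lamf q (S s') alpha a c n) * z) k = RtoC 0.
Proof. intros hq Hnk. rewrite tt_decomp by auto.
  rewrite (prodR_zero _ k n) by (auto; ring). unfold Cdiv. ring. Qed.

Lemma bound6 t T' p P' d D' x y Y' Qv Q' :
  0 <= t <= T' -> 0 <= p <= P' -> 0 < D' <= d -> 0 <= x <= 1 -> 0 <= y <= Y' -> 0 < Q' <= Qv ->
  t * p / d * x * y / Qv <= T' * P' / D' * Y' / Q'.
Proof. intros. unfold Rdiv.
  assert (/ d <= / D') by (apply Rinv_le_contravar; lra).
  assert (/ Qv <= / Q') by (apply Rinv_le_contravar; lra).
  assert (0 < / d) by (apply Rinv_0_lt_compat; lra).
  assert (0 < / Qv) by (apply Rinv_0_lt_compat; lra).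
  assert (t * p <= T' * P') by (apply Rmult_le_compat; lra).
  assert (t * p * / d <= T' * P' * / D') by (apply Rmult_le_compat; try lra; nra).
  assert (0 <= t * p * / d) by (apply Rmult_le_pos; [apply Rmult_le_pos|]; lra).
  assert (t * p * / d * x <= T' * P' * / D') by nra.
  assert (0 <= t * p * / d * x) by (apply Rmult_le_pos; lra).
  assert (t * p * / d * x * y <= T' * P' * / D' * Y') by (apply Rmult_le_compat; lra).
  apply Rmult_le_compat; try lra. apply Rmult_le_pos; lra. Qed.

Lemma nz_of_mod (x : C) : 0 < Cmod x -> x <> RtoC 0.
Proof. intros H E. rewrite E, Cmod_0 in H. lra. Qed.

Lemma final_eq q L s' m Rad k : 0 < q < 1 -> 0 < m ->
  prodR (fun j => q ^ j * L) k * (2 ^ k) ^ s' / (m ^ k * ((1 - q) ^ k) ^ s') * Rad ^ k / (1 - q) ^ k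
  = prodR (fun j => q ^ j * (L * 2 ^ s' * Rad / (m * (1 - q) ^ s' * (1 - q)))) k.
Proof. intros hq hm. rewrite !prodR_mult, !prodR_const.
  rewrite <- !pow_mult, (Nat.mul_comm k s'), !pow_mult.
  unfold Rdiv. rewrite !Rpow_mult_distr, !pow_inv, !Rpow_mult_distr.
  assert (0 < m ^ k) by (apply pow_lt; lra).
  assert (0 < (1 - q) ^ k) by (apply pow_lt; lra).
  assert (0 < ((1 - q) ^ s') ^ k) by (apply pow_lt, pow_lt; lra).
  field. repeat split; lra. Qed.

Lemma tt_bound q s' alpha a b c d Rad : 0 < q < 1 -> (forall k : nat, alpha <> - INR k) ->
  (forall j, (j < S s' - 1)%nat -> 0 < a j) -> (forall j, (j < S s' - 1)%nat -> 0 < c j) ->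
  exists K N0, 0 <= K /\ forall n k z, (N0 <= n)%nat -> Cmod z <= Rad ->
  Cmod (phi_term (S s') (S s') (numf q a b n) (denf q alpha c d n) q (RtoC (lamf q (S s') alpha a c n) * z) k)
   <= prodR (fun j => q ^ j * K) k.
Proof. intros hq halpha ha hc.
  destruct (alpha_lb q alpha hq halpha) as [m [Hm Hmj]].
  set (mu := muf q (S s') alpha a c). set (L := Rabs mu + 1).
  destruct (Ccv_bounded _ _ (Ccv_RtoC _ _ (lim_Lt q (S s') alpha a c hq ha hc))) as [N1 H1].
  destruct (ev_all (fun j n => Cmod (qpow q (RtoC (a j * INR n) + b j)) <= 1) s') as [N2 H2].
  { intros j Hj. destruct (exists_N_ge (a j) (- Re (b j))) as [N HN]. apply ha; lia.
    exists N. intros n Hn. rewrite Cmod_qpow, Re_RtoC_plus. apply Rpower_le1; auto. specialize (HN n Hn). lra. }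
  destruct (ev_all (fun j n => Cmod (qpow q (RtoC (c j * INR n) + d j)) <= q) s') as [N3 H3].
  { intros j Hj. destruct (exists_N_ge (c j) (1 - Re (d j))) as [N HN]. apply hc; lia.
    exists N. intros n Hn. rewrite Cmod_qpow, Re_RtoC_plus. specialize (HN n Hn).
    rewrite <- (Rpower_1 q) at 2 by lra. apply Rpower_decr; lra. }
  exists (L * 2 ^ s' * Rabs Rad / (m * (1 - q) ^ s' * (1 - q))), (max N1 (max N2 N3)). split.
  { unfold L. apply Rmult_le_pos. apply Rmult_le_pos. apply Rmult_le_pos. pose proof (Rabs_pos mu); lra.
    apply pow_le; lra. apply Rabs_pos. left. apply Rinv_0_lt_compat.
    apply Rmult_lt_0_compat. apply Rmult_lt_0_compat. auto. apply pow_lt; lra. lra. }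
  intros n k z Hn Hz.
  destruct (Compare_dec.le_lt_dec k n) as [Hkn | Hkn].
  2:{ rewrite tt_zero by (auto; lra). rewrite Cmod_0. apply prodR_nonneg. intros.
      apply Rmult_le_pos. apply pow_le; lra.
      unfold L. apply Rmult_le_pos. apply Rmult_le_pos. apply Rmult_le_pos. pose proof (Rabs_pos mu); lra.
      apply pow_le; lra. apply Rabs_pos. left. apply Rinv_0_lt_compat.
      apply Rmult_lt_0_compat. apply Rmult_lt_0_compat. auto. apply pow_lt; lra. lra. }
  specialize (H1 n ltac:(lia)). rewrite !Cmod_R in H1. fold mu in H1. fold L in H1.
  specialize (H2 n ltac:(lia)). specialize (H3 n ltac:(lia)).
  rewrite tt_decomp by lra.
  assert (HD0 : m ^ k <= Cmod (qpoch (qpow q (RtoC alpha)) q k)) by (apply Cmod_qpoch_ge_m; lra || auto).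
  assert (HPd : ((1 - q) ^ k) ^ s' <= Cmod (prodC (fun j => qpoch (denf q alpha c d n (S j)) q k) s')).
  { rewrite Cmod_prodC. apply prodR_ge_const. apply pow_le; lra. intros i Hi. simpl denf.
    apply Cmod_qpoch_ge; auto. }
  assert (HQ : (1 - q) ^ k <= Cmod (qpoch (RtoC q) q k)).
  { apply Cmod_qpoch_ge; auto. rewrite Cmod_R, Rabs_pos_eq; lra. }
  assert (Pm : 0 < m ^ k) by (apply pow_lt; lra).
  assert (P1 : 0 < (1 - q) ^ k) by (apply pow_lt; lra).
  assert (P2 : 0 < ((1 - q) ^ k) ^ s') by (apply pow_lt; lra).
  rewrite Cmod_div by (apply nz_of_mod; lra).
  rewrite !Cmod_mult.
  rewrite Cmod_div by (apply nz_of_mod; rewrite Cmod_mult; nra).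
  rewrite !Cmod_mult, Cmod_pow.
  eapply Rle_trans. apply (bound6 _ (prodR (fun j => q ^ j * L) k) _ ((2 ^ k) ^ s') _ (m ^ k * ((1 - q) ^ k) ^ s')
     _ _ (Rabs Rad ^ k) _ ((1 - q) ^ k)).
  - split. apply Cmod_ge_0. rewrite Cmod_R, Rabs_prodR. apply prodR_le. intros j Hj.
    split. apply Rabs_pos. rewrite Rabs_mult. 
    assert (q ^ n <= q ^ j) by (apply pow_decr; lra || lia).
    assert (0 <= q ^ n) by (apply pow_le; lra).
    rewrite (Rabs_left1 (q ^ n - q ^ j)) by lra.
    assert (0 <= Rabs (Ltf q (S s') alpha a c n)) by apply Rabs_pos. nra.
  - split. apply Cmod_ge_0. rewrite Cmod_prodC, <- prodR_const. apply prodR_le. intros i Hi.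
    split. apply Cmod_ge_0. eapply Rle_trans. apply Cmod_qpoch_le; auto. apply pow_incr.
    simpl numf. split. pose proof (Cmod_ge_0 (qpow q (RtoC (a i * INR n) + b i))); lra.
    specialize (H2 i Hi). lra.
  - split. nra. apply Rmult_le_compat; lra.
  - rewrite Cmod_R. unfold Xk. rewrite Rabs_mult, pow_1_abs, Rabs_pos_eq by (apply pow_le; lra).
    split. apply Rmult_le_pos. lra. apply pow_le; lra. rewrite Rmult_1_l. apply pow_le1. lra.
  - split. apply pow_le, Cmod_ge_0. apply pow_incr. split. apply Cmod_ge_0.
    eapply Rle_trans. apply Hz. apply Rle_abs.
  - split; lra.
  - rewrite final_eq by lra. apply Rle_refl.
Qed.

Lemma geom_bound q K : 0 < q < 1 -> 0 <= K ->
  exists C0, 0 <= C0 /\ forall k, prodR (fun j => q ^ j * K) k <= C0 * (1/2) ^ k.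
Proof. intros hq hK.
  pose proof (lim_pow q hq) as Hl. apply is_lim_seq_spec in Hl.
  assert (He : 0 < 1 / (2 * (K + 1))) by (apply Rdiv_lt_0_compat; lra).
  destruct (Hl (mkposreal _ He)) as [j1 Hj1]. specialize (Hj1 j1 (le_n _)). simpl in Hj1.
  rewrite Rminus_0_r, Rabs_pos_eq in Hj1 by (apply pow_le; lra).
  assert (Hq1 : q ^ j1 * K <= 1/2).
  { assert (q ^ j1 * K <= 1 / (2 * (K + 1)) * K) by (apply Rmult_le_compat_r; lra).
    assert (1 / (2 * (K + 1)) * K <= 1/2). { unfold Rdiv. apply Rmult_le_reg_l with (2 * (K+1)). lra.
      field_simplify; lra. } lra. }
  set (M := K + 1).
  assert (HM : 1 <= 2 * M) by (unfold M; lra).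
  exists ((2 * M) ^ j1). split. apply pow_le; lra.
  assert (forall k, prodR (fun j => q ^ j * K) k <= (2 * M) ^ j1 * (1/2) ^ k /\ ((k <= j1)%nat -> prodR (fun j => q ^ j * K) k <= M ^ k)).
  { induction k.
    - simpl. split. pose proof (pow_R1_Rle (2 * M) j1 HM). lra. intros; lra.
    - destruct IHk as [IH1 IH2]. simpl prodR.
      assert (P0 : 0 <= prodR (fun j => q ^ j * K) k) by (apply prodR_nonneg; intros; apply Rmult_le_pos; [apply pow_le|]; lra).
      assert (Hqk : q ^ k * K <= M). { assert (q ^ k <= 1) by (apply pow_le1; lra). pose proof (pow_le q k). unfold M; nra. }
      assert (Hqk0 : 0 <= q ^ k * K) by (apply Rmult_le_pos; [apply pow_le|]; lra).
      destruct (Nat.lt_ge_cases k j1) as [Hk | Hk].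
      + assert (A1 : prodR (fun j => q ^ j * K) k * (q ^ k * K) <= M ^ S k).
        { simpl. rewrite Rmult_comm. apply Rmult_le_compat; auto. apply IH2; lia. }
        split.
        * eapply Rle_trans. apply A1.
          assert ((2 * M) ^ S k <= (2 * M) ^ j1) by (apply Rle_pow; auto).
          replace (M ^ S k) with ((2 * M) ^ S k * (1/2) ^ S k) by (rewrite <- Rpow_mult_distr; f_equal; field).
          apply Rmult_le_compat_r. apply pow_le; lra. auto.
        * intros; auto.
      + split.
        * assert (q ^ k * K <= 1/2).
          { eapply Rle_trans. 2: apply Hq1. apply Rmult_le_compat_r. auto. apply pow_decr; lra || lia. }
          simpl. replace ((2 * M) ^ j1 * (1 / 2 * (1 / 2) ^ k)) with ((2 * M) ^ j1 * (1/2) ^ k * (1/2)) by ring.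
          apply Rmult_le_compat; auto.
        * intros; lia. }
  intros k. apply H.
Qed.

Lemma Cpow_one k : (RtoC 1 ^ k)%C = RtoC 1.
Proof. induction k; simpl. auto. rewrite IHk. ring. Qed.

Lemma phi_term_scale r s num den q (c z : C) k :
  phi_term r s num den q (c * z) k = (phi_term r s num den q (c * RtoC 1) k * z ^ k)%C.
Proof. unfold phi_term. rewrite !Cpow_mult_l, Cpow_one. unfold Cdiv. ring. Qed.

Lemma series_conv (u : nat -> C) C0 : (forall k, Cmod (u k) <= C0 * (1/2) ^ k) ->
  exists L, (forall e, 0 < e -> exists M, forall m, (M <= m)%nat -> Cmod (csum u m - L) < e)
        /\ Defs.C_lim (sum_n u) = L.
Proof. intros Hb.
  assert (Hex : ex_series (K := C_AbsRing) (V := C_CompleteNormedModule) u).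
  { apply (ex_series_le (K := C_AbsRing) (V := C_CompleteNormedModule) u (fun k => C0 * (1/2) ^ k)).
    intros k. change (Cmod (u k) <= C0 * (1/2) ^ k). apply Hb.
    apply (ex_series_scal_l (K := R_AbsRing) (V := R_NormedModule) C0 (fun k => (1/2)^k)).
    apply ex_series_geom. rewrite Rabs_pos_eq; lra. }
  destruct Hex as [L HL].
  assert (HE : forall e, 0 < e -> exists M, forall m, (M <= m)%nat -> Cmod (sum_n u m - L) < e).
  { intros e He.
    assert (Hf : 0 < e / @norm_factor C_AbsRing C_NormedModule).
    { apply Rdiv_lt_0_compat; auto. apply norm_factor_gt_0. }
    destruct (HL (ball L (mkposreal _ Hf))) as [M HM]. { exists (mkposreal _ Hf). auto. }
    exists M. intros m Hm. specialize (HM m Hm).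
    apply (norm_compat2 (V := C_NormedModule)) in HM. simpl in HM.
    change (@norm C_AbsRing C_NormedModule (@minus (NormedModule.AbelianGroup C_AbsRing C_NormedModule) (sum_n u m) L) < e).
    replace (norm_factor * (e / norm_factor)) with e in HM. exact HM.
    field. apply Rgt_not_eq, norm_factor_gt_0. }
  exists L. split.
  - intros e He. destruct (HE e He) as [M HM]. exists (S M). intros m Hm.
    destruct m. lia. rewrite <- sum_n_csum. apply HM. lia.
  - apply C_lim_correct. auto.
Qed.

Lemma Cmod_self_minus (x : C) e : 0 < e -> Cmod (x - x) < e.
Proof. intros. replace (x - x)%C with (RtoC 0) by ring. rewrite Cmod_0. auto. Qed.

Lemma part1 q s' alpha a b c d : 0 < q < 1 -> (forall k : nat, alpha <> - INR k) ->
  (forall j, (j < S s' - 1)%nat -> 0 < a j) -> (forall j, (j < S s' - 1)%nat -> 0 < c j) ->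
  forall Rad eps, 0 < eps -> exists N, forall n, (N <= n)%nat -> forall z, Cmod z <= Rad ->
  Cmod (rphis (S s') (S s') (numf q a b n) (denf q alpha c d n) q (RtoC (lamf q (S s') alpha a c n) * z)
        - rphis 0 1 (fun _ => RtoC 0) (fun _ => qpow q (RtoC alpha)) q (RtoC (muf q (S s') alpha a c) * z)) < eps.
Proof. intros hq halpha ha hc Rad eps Heps.
  set (tt := fun n k z => phi_term (S s') (S s') (numf q a b n) (denf q alpha c d n) q (RtoC (lamf q (S s') alpha a c n) * z) k).
  set (uu := fun k z => phi_term 0 1 (fun _ => RtoC 0) (fun _ => qpow q (RtoC alpha)) q (RtoC (muf q (S s') alpha a c) * z) k).
  destruct (tt_bound q s' alpha a b c d Rad hq halpha ha hc) as [K [N0 [HK HtK]]].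
  destruct (geom_bound q K hq HK) as [C0 [HC0 HG]].
  destruct (alpha_lb q alpha hq halpha) as [m [Hm Hmj]].
  assert (HD : forall k, qpoch (qpow q (RtoC alpha)) q k <> RtoC 0).
  { intros k. apply nz_of_mod. apply Rlt_le_trans with (m ^ k). apply pow_lt; lra. apply Cmod_qpoch_ge_m; [lra | auto]. }
  assert (HQ : forall k, qpoch (RtoC q) q k <> RtoC 0).
  { intros k. apply nz_of_mod. apply Rlt_le_trans with ((1 - q) ^ k). apply pow_lt; lra.
    apply Cmod_qpoch_ge; auto. rewrite Cmod_R, Rabs_pos_eq; lra. }
  assert (Hunif : forall k e, 0 < e -> exists N, forall n z, (N <= n)%nat -> Cmod z <= Rad -> Cmod (tt n k z - uu k z) <= e).
  { intros k e He.
    assert (Hr : 0 < Rabs Rad ^ k + 1) by (pose proof (pow_le (Rabs Rad) k (Rabs_pos _)); lra).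
    destruct (coef_conv q s' alpha a b c d k hq ha hc (HD k) (HQ k) (e / (Rabs Rad ^ k + 1))) as [N HN].
    { apply Rdiv_lt_0_compat; lra. }
    exists N. intros n z Hn Hz. specialize (HN n Hn). unfold tt, uu.
    rewrite (phi_term_scale (S s')), (phi_term_scale 0).
    replace (phi_term (S s') (S s') (numf q a b n) (denf q alpha c d n) q (RtoC (lamf q (S s') alpha a c n) * RtoC 1) k * z ^ k -
      phi_term 0 1 (fun _ : nat => RtoC 0) (fun _ : nat => qpow q (RtoC alpha)) q (RtoC (muf q (S s') alpha a c) * RtoC 1) k * z ^ k)%C
      with ((phi_term (S s') (S s') (numf q a b n) (denf q alpha c d n) q (RtoC (lamf q (S s') alpha a c n) * RtoC 1) k -
      phi_term 0 1 (fun _ : nat => RtoC 0) (fun _ : nat => qpow q (RtoC alpha)) q (RtoC (muf q (S s') alpha a c) * RtoC 1) k) * z ^ k)%C by ring.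
    rewrite Cmod_mult, Cmod_pow.
    assert (Cmod z ^ k <= Rabs Rad ^ k).
    { apply pow_incr. split. apply Cmod_ge_0. eapply Rle_trans. apply Hz. apply Rle_abs. }
    assert (0 <= Cmod z ^ k) by (apply pow_le, Cmod_ge_0).
    apply Rle_trans with (e / (Rabs Rad ^ k + 1) * (Rabs Rad ^ k + 1)).
    apply Rmult_le_compat; try lra. apply Cmod_ge_0.
    right; field; lra. }
  assert (Htb : forall n k z, (N0 <= n)%nat -> Cmod z <= Rad -> Cmod (tt n k z) <= C0 * (1/2) ^ k).
  { intros n k z Hn Hz. apply Rle_trans with (prodR (fun j => q ^ j * K) k). unfold tt. apply HtK; assumption. apply HG. }
  assert (Hub : forall k z, Cmod z <= Rad -> Cmod (uu k z) <= C0 * (1/2) ^ k).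
  { intros k z Hz. apply (Ccv_unique_le (fun n => tt n k z)).
    - intros e He. destruct (Hunif k (e/2)) as [N HN]. lra. exists N. intros n Hn.
      specialize (HN n z Hn Hz). cbv beta. apply Rle_lt_trans with (e/2). exact HN. lra.
    - exists N0. intros n Hn. apply Htb; auto. }
  destruct (uniform_series Rad tt uu C0 N0 HC0) with (eps := eps) as [N HN].
  { intros n k z Hn Hz. split; [apply Htb | apply Hub]; assumption. }
  { intros n k z Hnk. unfold tt. apply tt_zero; [lra | exact Hnk]. }
  { exact Hunif. }
  { exact Heps. }
  exists N. intros n Hn z Hz.
  destruct (series_conv (fun k => uu k z) C0) as [L [HL HLim]]. { intros k; apply Hub; auto. }
  unfold rphis, C_series.
  assert (E1 : Defs.C_lim (sum_n (phi_term (S s') (S s') (numf q a b n) (denf q alpha c d n) q (RtoC (lamf q (S s') alpha a c n) * z)))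
     = csum (fun k => tt n k z) (S n)).
  { apply C_lim_correct. intros e He. exists n. intros M HM.
    rewrite sum_n_csum. replace (S M) with (S n + (M - n))%nat by lia.
    rewrite (csum_zero_tail _ n (M - n)).
    - apply Cmod_self_minus. exact He.
    - intros k Hk. apply tt_zero; [lra | exact Hk]. }
  rewrite E1. unfold uu in HLim. change (Defs.C_lim (sum_n (fun k => uu k z)) = L) in HLim.
  assert (E2 : Defs.C_lim (sum_n (phi_term 0 1 (fun _ => RtoC 0) (fun _ => qpow q (RtoC alpha)) q (RtoC (muf q (S s') alpha a c) * z))) = L).
  { rewrite <- HLim. reflexivity. }
  rewrite E2. apply HN; auto.
Qed.

Lemma Cmod_xy (w : C) : Re w <> 0 -> Cmod w = Rabs (Re w) * sqrt (1 + (Im w / Re w)²).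
Proof. intros hx. destruct w as [x y]. simpl in *. unfold Cmod. simpl.
  rewrite <- sqrt_Rsqr_abs, <- sqrt_mult. f_equal. unfold Rsqr. field. auto.
  apply Rle_0_sqr. pose proof (Rle_0_sqr (y / x)). lra. Qed.

Lemma Carg_cos_sin (w : C) : w <> RtoC 0 -> Cmod w * cos (Carg w) = Re w /\ Cmod w * sin (Carg w) = Im w.
Proof. intros hw. unfold Carg.
  destruct (Rlt_dec 0 (Re w)) as [H1 | H1].
  - rewrite Cmod_xy by lra. rewrite Rabs_pos_eq by lra. rewrite cos_atan, sin_atan.
    assert (0 < sqrt (1 + (Im w / Re w)²)) by (apply sqrt_lt_R0; pose proof (Rle_0_sqr (Im w / Re w)); lra).
    split; field; lra.
  - destruct (Rlt_dec (Re w) 0) as [H2 | H2].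
    + rewrite Cmod_xy by lra. rewrite Rabs_left by lra.
      assert (0 < sqrt (1 + (Im w / Re w)²)) by (apply sqrt_lt_R0; pose proof (Rle_0_sqr (Im w / Re w)); lra).
      destruct (Rle_dec 0 (Im w)).
      * rewrite neg_cos, neg_sin, cos_atan, sin_atan. split; field; lra.
      * rewrite cos_minus, sin_minus, cos_PI, sin_PI, cos_atan, sin_atan. split; field; lra.
    + assert (Hx : Re w = 0) by lra.
      assert (Cmod w = Rabs (Im w)).
      { destruct w as [x y]. simpl in *. unfold Cmod. simpl. subst. rewrite <- sqrt_Rsqr_abs. f_equal. unfold Rsqr. ring. }
      destruct (Rlt_dec 0 (Im w)).
      * rewrite cos_PI2, sin_PI2, H, Rabs_pos_eq by lra. split; lra.
      * destruct (Rlt_dec (Im w) 0).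
        -- rewrite cos_neg, sin_neg, cos_PI2, sin_PI2, H, Rabs_left by lra. split; lra.
        -- exfalso. apply hw. destruct w as [x y]. simpl in *. apply injective_projections; simpl; lra.
Qed.

Lemma cexp_Clog (w : C) : w <> RtoC 0 -> cexp (Clog w) = w.
Proof. intros hw. destruct (Carg_cos_sin w hw) as [H1 H2]. unfold cexp, Clog. simpl.
  rewrite exp_ln by (apply Cmod_gt_0; auto). destruct w as [x y]. simpl in *. rewrite H1, H2. auto. Qed.

Lemma atan_le0 t : t <= 0 -> atan t <= 0.
Proof. intros. destruct (Req_dec t 0). subst; rewrite atan_0; lra. rewrite <- atan_0. left; apply atan_increasing; lra. Qed.
Lemma atan_gt0 t : 0 < t -> 0 < atan t.
Proof. intros. rewrite <- atan_0. apply atan_increasing; lra. Qed.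

Lemma Carg_range (w : C) : - PI < Carg w <= PI.
Proof. pose proof PI_RGT_0. unfold Carg.
  destruct (Rlt_dec 0 (Re w)). pose proof (atan_bound (Im w / Re w)). lra.
  destruct (Rlt_dec (Re w) 0).
  - assert (/ Re w < 0) by (apply Rinv_lt_0_compat; lra).
    pose proof (atan_bound (Im w / Re w)).
    destruct (Rle_dec 0 (Im w)).
    + assert (Im w / Re w <= 0) by (unfold Rdiv; nra).
      pose proof (atan_le0 _ H2). lra.
    + assert (0 < Im w / Re w) by (unfold Rdiv; nra).
      pose proof (atan_gt0 _ H2). lra.
  - destruct (Rlt_dec 0 (Im w)). lra. destruct (Rlt_dec (Im w) 0); lra.
Qed.

Lemma Carg_polar r phi : 0 < r -> - (PI / 2) < phi <= PI / 2 -> Carg (r * cos phi, r * sin phi) = phi.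
Proof. intros hr hphi. unfold Carg. simpl.
  destruct (Req_dec phi (PI / 2)) as [E | E].
  - subst. rewrite cos_PI2, sin_PI2, Rmult_0_r, Rmult_1_r.
    destruct (Rlt_dec 0 0). lra. destruct (Rlt_dec 0 0). lra. destruct (Rlt_dec 0 r). auto. lra.
  - assert (0 < cos phi) by (apply cos_gt_0; lra).
    destruct (Rlt_dec 0 (r * cos phi)). 2: exfalso; nra.
    replace (r * sin phi / (r * cos phi)) with (tan phi) by (unfold tan; field; lra).
    apply atan_tan. lra.
Qed.

Lemma Carg_scal t (w : C) : 0 < t -> Carg (RtoC t * w)%C = Carg w.
Proof. intros ht. destruct w as [x y]. unfold Carg, Cmult, RtoC. simpl.
  replace (t * x - 0 * y) with (t * x) by ring. replace (t * y + 0 * x) with (t * y) by ring.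
  replace (t * y / (t * x)) with (y / x).
  2:{ destruct (Req_dec x 0). subst. unfold Rdiv. rewrite Rmult_0_r, !Rinv_0. ring. field. lra. }
  destruct (Rlt_dec 0 (t * x)), (Rlt_dec 0 x); try (exfalso; nra); auto.
  destruct (Rlt_dec (t * x) 0), (Rlt_dec x 0); try (exfalso; nra).
  - destruct (Rle_dec 0 (t * y)), (Rle_dec 0 y); auto; exfalso; nra.
  - destruct (Rlt_dec 0 (t * y)), (Rlt_dec 0 y); try (exfalso; nra); auto.
    destruct (Rlt_dec (t * y) 0), (Rlt_dec y 0); auto; exfalso; nra.
Qed.

Lemma prodR_split (f : nat -> R) a b : prodR f (a + b) = prodR f a * prodR (fun j => f (a + j)%nat) b.
Proof. induction b; simpl. rewrite Nat.add_0_r. ring. rewrite Nat.add_succ_r. simpl. rewrite IHb. ring. Qed.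

Lemma weier (y : nat -> R) m : (forall j, 0 <= y j <= 1) -> 1 - rsum y m <= prodR (fun j => 1 - y j) m /\ 0 <= prodR (fun j => 1 - y j) m <= 1.
Proof. intros H. induction m; simpl. lra. destruct IHm as [H1 [H2 H3]]. specialize (H m).
  split. nra. split; nra. Qed.

Lemma rsum_ext (f g : nat -> R) m : (forall k, (k < m)%nat -> f k = g k) -> rsum f m = rsum g m.
Proof. induction m; simpl; intros H. auto. rewrite IHm, H; auto; intros; apply H; lia. Qed.

Lemma qinf_nz x q : 0 < q < 1 -> 0 < x -> (forall j, x * q ^ j <> 1) -> qpoch_inf (RtoC x) q <> RtoC 0.
Proof. intros hq hx hne.
  pose proof (lim_pow q hq) as Hl. apply is_lim_seq_spec in Hl.
  assert (He : 0 < (1 - q) / (2 * x)) by (apply Rdiv_lt_0_compat; lra).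
  destruct (Hl (mkposreal _ He)) as [J HJ]. specialize (HJ J (le_n _)). simpl in HJ.
  rewrite Rminus_0_r, Rabs_pos_eq in HJ by (apply pow_le; lra).
  assert (HxJ : x * q ^ J <= (1 - q) / 2).
  { assert (x * q ^ J <= x * ((1 - q) / (2 * x))) by (apply Rmult_le_compat_l; lra).
    replace (x * ((1 - q) / (2 * x))) with ((1 - q) / 2) in H by (field; lra). auto. }
  set (f := fun j => 1 - x * q ^ j).
  set (r := fun i => prodR (fun j => f (J + j)%nat) i).
  assert (Hy : forall j, 0 <= x * q ^ (J + j) <= 1).
  { intros j. split. apply Rmult_le_pos. lra. apply pow_le; lra.
    rewrite pow_add. assert (q ^ j <= 1) by (apply pow_le1; lra). pose proof (pow_le q j ltac:(lra)). nra. }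
  assert (Hr : forall i, 1/2 <= r i /\ 0 <= r i <= 1).
  { intros i. destruct (weier (fun j => x * q ^ (J + j)) i Hy) as [W1 W2].
    unfold r, f. split; auto.
    assert (rsum (fun j => x * q ^ (J + j)) i <= 1/2).
    { rewrite (rsum_ext _ (fun j => x * q ^ J * q ^ j)) by (intros; rewrite pow_add; ring).
      rewrite rsum_scal. pose proof (rsum_geom q i).
      assert (0 <= q ^ i) by (apply pow_le; lra).
      assert (rsum (fun j => q ^ j) i <= 1 / (1 - q)).
      { apply Rmult_le_reg_r with (1 - q). lra. rewrite H. field_simplify; lra. }
      assert (0 <= x * q ^ J) by (apply Rmult_le_pos; [|apply pow_le]; lra).
      assert (0 <= rsum (fun j => q ^ j) i).
      { apply Rmult_le_reg_r with (1 - q). lra. rewrite H. assert (q ^ i <= 1) by (apply pow_le1; lra). lra. }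
      apply Rle_trans with ((1 - q) / 2 * (1 / (1 - q))).
      apply Rmult_le_compat; auto. right; field; lra. }
    lra. }
  assert (Hdec : forall i, r (S i) <= r i).
  { intros i. unfold r. simpl. fold (r i). specialize (Hy i). destruct (Hr i) as [_ [A1 A2]]. unfold f. nra. }
  destruct (ex_finite_lim_seq_decr r (1/2) Hdec (fun i => proj1 (Hr i))) as [lr Hlr].
  assert (Hlr2 : 1/2 <= lr).
  { pose proof (is_lim_seq_le (fun _ => 1/2) r (1/2) lr (fun i => proj1 (Hr i)) (is_lim_seq_const _) Hlr). simpl in H. auto. }
  assert (HpJ : prodR f J <> 0).
  { assert (forall j, f j <> 0). { intros j. unfold f. specialize (hne j). lra. }
    clear -H. induction J; simpl. lra. apply Rmult_integral_contrapositive; auto. }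
  assert (Hp : is_lim_seq (fun k => prodR f k) (prodR f J * lr)).
  { apply (is_lim_seq_incr_n _ J). apply is_lim_seq_ext with (fun n => prodR f J * r n).
    { intros n. unfold r. rewrite Nat.add_comm, prodR_split. auto. }
    apply is_lim_seq_mult'. apply is_lim_seq_const. auto. }
  unfold qpoch_inf. rewrite (C_lim_correct _ (RtoC (prodR f J * lr))).
  { intros E. apply RtoC_inj in E. apply Rmult_integral in E. destruct E; auto. lra. }
  intros e He'. destruct (Ccv_RtoC _ _ Hp e He') as [N HN]. exists N. intros n Hn.
  rewrite qpoch_RtoC. apply HN; auto.
Qed.

Lemma Cppow_def (v c : C) : v <> RtoC 0 -> Cppow v c = cexp (c * Clog v).
Proof. intros hv. unfold Cppow. destruct (Ceq_dec v 0). contradiction. auto. Qed.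

Lemma half_half (L : C) : (RtoC (1/2) * L + RtoC (1/2) * L)%C = L.
Proof. rewrite <- Cmult_plus_distr_r, <- RtoC_plus. replace (1/2 + 1/2) with 1 by field. ring. Qed.

Lemma Csqrt_nz w : Csqrt w <> RtoC 0 \/ w = RtoC 0.
Proof. unfold Csqrt, Cppow. destruct (Ceq_dec w 0). right; auto. left. apply cexp_neq0. Qed.

Lemma Csqrt_sq w : w <> RtoC 0 -> (Csqrt w * Csqrt w)%C = w.
Proof. intros hw. unfold Csqrt. rewrite Cppow_def by auto. rewrite <- cexp_plus, half_half. apply cexp_Clog; auto. Qed.

Lemma Clog_cexp_half (w : C) : w <> RtoC 0 -> Clog (cexp (RtoC (1/2) * Clog w)) = (RtoC (1/2) * Clog w)%C.
Proof. intros hw. unfold Clog at 1. rewrite Cmod_cexp.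
  rewrite ln_exp.
  unfold cexp. unfold Clog. unfold Cmult, RtoC. simpl.
  replace (1 / 2 * Carg w + 0 * ln (Cmod w)) with (1/2 * Carg w) by ring.
  rewrite Carg_polar. apply injective_projections; simpl; ring.
  apply exp_pos. pose proof (Carg_range w). lra. Qed.

Lemma Clog_sqrt (w : C) : w <> RtoC 0 -> Clog (Csqrt w) = (RtoC (1/2) * Clog w)%C.
Proof. intros hw. unfold Csqrt. rewrite Cppow_def by auto. apply Clog_cexp_half; auto. Qed.

Lemma Clog_scal t (v : C) : 0 < t -> v <> RtoC 0 -> Clog (RtoC t * v)%C = (RtoC (ln t) + Clog v)%C.
Proof. intros ht hv. unfold Clog. rewrite Carg_scal by auto. rewrite Cmod_mult, Cmod_R, Rabs_pos_eq by lra.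
  rewrite ln_mult. unfold Cplus, RtoC; simpl. apply injective_projections; simpl; ring. auto. apply Cmod_gt_0; auto. Qed.

Lemma RtoC_nz x : x <> 0 -> RtoC x <> RtoC 0.
Proof. intros H E. apply RtoC_inj in E. auto. Qed.

Lemma prefactor_one q alpha (w : C) : 0 < q < 1 -> w <> RtoC 0 ->
  (Cppow w (RtoC ((1 - alpha) / 2)) * qpow (1 - q) (RtoC 1 - RtoC alpha)
   * Cppow (RtoC (1 - q) * Csqrt w) (RtoC (alpha - 1)))%C = RtoC 1.
Proof. intros hq hw.
  assert (hs : Csqrt w <> RtoC 0) by (destruct (Csqrt_nz w); auto; contradiction).
  rewrite (Cppow_def w) by auto.
  rewrite (Cppow_def (RtoC (1 - q) * Csqrt w)) by (apply Cmult_neq_0; auto; apply RtoC_nz; lra).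
  unfold qpow. rewrite Clog_scal, Clog_sqrt by (auto; lra).
  rewrite <- !cexp_plus. etransitivity; [|apply cexp_0]. f_equal.
  replace ((1 - alpha) / 2) with ((1 - alpha) * (1/2)) by field.
  rewrite RtoC_mult, !RtoC_minus. ring. Qed.

Lemma part2 q alpha A (z : C) : 0 < q < 1 -> (forall k : nat, alpha <> - INR k) -> 0 < A -> z <> RtoC 0 ->
  rphis 0 1 (fun _ => RtoC 0) (fun _ => qpow q (RtoC alpha)) q (- RtoC A * z * RtoC ((q - 1) ^ 2) * qpow q (RtoC alpha))%C
  = (Cppow (RtoC A * z) (RtoC ((1 - alpha) / 2)) * Gamma_q q (RtoC alpha)
      * Jq2 (RtoC (alpha - 1)) (RtoC (2 * (1 - q)) * Csqrt (RtoC A * z)) q)%C.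
Proof. intros hq halpha hA hz.
  assert (hw : (RtoC A * z)%C <> RtoC 0) by (apply Cmult_neq_0; auto; apply RtoC_nz; lra).
  set (w := (RtoC A * z)%C) in *.
  assert (HQ1 : qpoch_inf (RtoC q) q <> RtoC 0).
  { apply qinf_nz; try lra. intros j. assert (q ^ j <= 1) by (apply pow_le1; lra).
    pose proof (pow_le q j ltac:(lra)). nra. }
  assert (HQ2 : qpoch_inf (qpow q (RtoC alpha)) q <> RtoC 0).
  { rewrite qpow_R by lra. apply qinf_nz; auto. apply Rpower_pos.
    intros j E. destruct (alpha_lb q alpha hq halpha) as [m [Hm Hmj]]. specialize (Hmj j).
    rewrite qpow_R, <- RtoC_mult, E in Hmj by lra. replace (RtoC 1 - RtoC 1)%C with (RtoC 0) in Hmj by ring.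
    rewrite Cmod_0 in Hmj. lra. }
  unfold Gamma_q, Jq2.
  replace (RtoC (alpha - 1) + RtoC 1)%C with (RtoC alpha) by (rewrite <- RtoC_plus; f_equal; ring).
  assert (Hx2 : ((RtoC (2 * (1 - q)) * Csqrt w) ^ 2)%C = (RtoC (2 * (1 - q)) * RtoC (2 * (1 - q)) * w)%C).
  { transitivity (RtoC (2 * (1 - q)) * RtoC (2 * (1 - q)) * (Csqrt w * Csqrt w))%C. simpl; ring.
    rewrite Csqrt_sq; auto. }
  rewrite Hx2.
  replace (- qpow q (RtoC alpha) * (RtoC (2 * (1 - q)) * RtoC (2 * (1 - q)) * w) / RtoC 4)%C
    with (- RtoC A * z * RtoC ((q - 1) ^ 2) * qpow q (RtoC alpha))%C.
  2:{ unfold w. rewrite RtoC_pow, !RtoC_mult, !RtoC_minus. field. }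
  set (R0 := rphis 0 1 (fun _ => RtoC 0) (fun _ => qpow q (RtoC alpha)) q (- RtoC A * z * RtoC ((q - 1) ^ 2) * qpow q (RtoC alpha))%C).
  replace (RtoC (2 * (1 - q)) * Csqrt w / RtoC 2)%C with (RtoC (1 - q) * Csqrt w)%C
    by (rewrite RtoC_mult; field; apply RtoC_nz; lra).
  pose proof (prefactor_one q alpha w hq hw) as HP.
  transitivity ((Cppow w (RtoC ((1 - alpha) / 2)) * qpow (1 - q) (RtoC 1 - RtoC alpha)
   * Cppow (RtoC (1 - q) * Csqrt w) (RtoC (alpha - 1))) * R0)%C.
  { rewrite HP. ring. }
  field. split; auto.
Qed.

Theorem theorem1 (q : R) (s : nat) (alpha : R) (a c : nat -> R) (b d : nat -> C)
  (hq : 0 < q < 1) (hs : (1 <= s)%nat)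
  (halpha : forall k : nat, alpha <> - INR k)
  (ha : forall j : nat, (j < s - 1)%nat -> 0 < a j)
  (hc : forall j : nat, (j < s - 1)%nat -> 0 < c j)
  (hb : forall j : nat, (j < s - 1)%nat -> forall n : nat, (1 <= n)%nat ->
          forall k : nat, a j * INR n + Re (b j) <> - INR k)
  (hd : forall j : nat, (j < s - 1)%nat -> forall n : nat, (1 <= n)%nat ->
          forall k : nat, c j * INR n + Re (d j) <> - INR k) :
  let A := prodR (fun j => qnum q (a j)) (s - 1)
           / prodR (fun j => qnum q (c j)) (s - 1) in
  let lam (n : nat) :=
    Rpower q (INR n + alpha) * prodR (fun j => qnum (Rpower q (c j)) (INR n)) (s - 1)
    / (qnum q (INR n) * prodR (fun j => qnum (Rpower q (a j)) (INR n)) (s - 1))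
    * (q - 1) in
  let num (n : nat) (i : nat) : C :=
    match i with
    | O => qpow q (- RtoC (INR n))
    | S j => qpow q (RtoC (a j * INR n) + b j)
    end in
  let den (n : nat) (i : nat) : C :=
    match i with
    | O => qpow q (RtoC alpha)
    | S j => qpow q (RtoC (c j * INR n) + d j)
    end in
  let F (z : C) : C :=
    rphis 0 1 (fun _ => 0%C) (fun _ => qpow q (RtoC alpha)) q
      (- RtoC A * z * RtoC ((q - 1) ^ 2) * qpow q (RtoC alpha))%C in
  (* uniform convergence on every compact subset of C (= on every closed disk) *)
  (forall (Rad eps : R), 0 < eps -> exists N : nat, forall n : nat, (N <= n)%nat ->
     forall z : C, Cmod z <= Rad ->
       Cmod (rphis s s (num n) (den n) q (RtoC (lam n) * z) - F z)%C < eps)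
  /\
  (forall z : C, z <> 0%C ->
     F z = (Cppow (RtoC A * z) (RtoC ((1 - alpha) / 2)) * Gamma_q q (RtoC alpha)
            * Jq2 (RtoC (alpha - 1)) (RtoC (2 * (1 - q)) * Csqrt (RtoC A * z)) q)%C).
Proof.
  intros A lam num den F.
  destruct s as [|s']. lia.
  split.
  - intros Rad eps Heps.
    destruct (part1 q s' alpha a b c d hq halpha ha hc Rad eps Heps) as [N HN].
    exists N. intros n Hn z Hz. specialize (HN n Hn z Hz).
    assert (EF : F z = rphis 0 1 (fun _ => RtoC 0) (fun _ => qpow q (RtoC alpha)) q (RtoC (muf q (S s') alpha a c) * z)).
    { unfold F. f_equal. rewrite muf_eq by auto. rewrite qpow_R by lra.
      unfold A, Af. rewrite !RtoC_mult, <- RtoC_opp. ring. }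
    rewrite EF. exact HN.
  - intros z hz. unfold F. apply part2; auto.
    unfold A. apply Rdiv_lt_0_compat; apply prodR_pos; intros i Hi; unfold qnum;
      apply Rdiv_lt_0_compat; try lra.
    + pose proof (Rpower_lt1 q (a i) hq (ha i Hi)). lra.
    + pose proof (Rpower_lt1 q (c i) hq (hc i Hi)). lra.
Qed.
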